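(* Let $g:\mathbb{R}\to\mathbb{R}$ be a univariate ReLU network whose weights and biases are rational numbers, let $x,\epsilon\in\mathbb{Q}$ with $\epsilon\ge 0$, and let $m$ be the number of weights and biases of $g$ and $d$ the maximal bit length of any of them (and of $x,\epsilon$). Then $\min_{t\in[x-\epsilon,x+\epsilon]}g(t)$ is attained and is a rational number whose bit length is $O(m\cdot d)$, i.e., bounded linearly in the encoding size of $g$.
   Context: A univariate ReLU network $g:\mathbb{R}\to\mathbb{R}$ is a composition of layers $h\mapsto\mathrm{ReLU}(W_k h+b_k)$, $k=1,\dots,\kappa$, with rational weight matrices $W_k$ and bias vectors $b_k$ encoded in binary, input and output dimension 1, and $\mathrm{ReLU}(t)=\max(0,t)$ applied coordinatewise. The bit length of a rational $p/q$ (in lowest terms) is the number of bits needed to write $p$ and $q$ in binary. *)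

(* Defs.v *)
From mathcomp Require Import all_boot all_order all_algebra.
From mathcomp Require Import reals.
Set Implicit Arguments. Unset Strict Implicit. Unset Printing Implicit Defensive.
Import Order.TTheory GRing.Theory Num.Theory.
Local Open Scope ring_scope.

(* Number of binary digits of a natural number (0 is written with 1 digit). *)
Definition bitlen_nat (n : nat) : nat := (trunc_log 2 n).+1.

(* Bit length of a rational p/q in lowest terms (mathcomp rationals are
   always stored in lowest terms with q > 0): bits of |p| plus bits of q. *)
Definition bitlen_rat (r : rat) : nat :=
  (bitlen_nat `|numq r|%N + bitlen_nat `|denq r|%N)%N.

(* A layer h |-> ReLU(W h + b): W given as the list of its rows, b as a list. *)
Definition layer := (seq (seq rat) * seq rat)%type.

(* A (univariate) ReLU network: the list of its layers, applied first to last. *)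
Definition relu_net := seq layer.

Definition wf_layer (nin nout : nat) (L : layer) : bool :=
  [&& size L.1 == nout, all (fun row => size row == nin) L.1 & size L.2 == nout].

Fixpoint wf_from (nin : nat) (N : relu_net) : bool :=
  match N with
  | [::] => nin == 1%N
  | L :: N' => wf_layer nin (size L.2) L && wf_from (size L.2) N'
  end.

Definition wf_net (N : relu_net) : bool := (N != [::]) && wf_from 1 N.

Definition relu (R : realType) (t : R) : R := Num.max 0 t.

Definition apply_layer (R : realType) (L : layer) (h : seq R) : seq R :=
  [seq relu (\sum_(j < size rb.1) ratr (nth 0 rb.1 j) * nth 0 h j + ratr rb.2)
  | rb <- zip L.1 L.2].

Definition net_eval (R : realType) (N : relu_net) (t : R) : R :=
  head 0 (foldl (fun h L => apply_layer L h) [:: t] N).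

Definition params (N : relu_net) : seq rat :=
  flatten [seq flatten L.1 ++ L.2 | L <- N].

Definition num_params (N : relu_net) : nat := size (params N).

Definition max_bits (N : relu_net) (x eps : rat) : nat :=
  \max_(r <- x :: eps :: params N) bitlen_rat r.

(* Main.v *)
Require Import Defs.
From mathcomp Require Import all_boot all_order all_algebra.
From mathcomp Require Import reals ring lra zify.
Import Order.TTheory GRing.Theory Num.Theory.
Local Open Scope ring_scope.
Set Implicit Arguments. Unset Strict Implicit.

Definition aff := (rat * rat)%type.
Definition ae (R : realType) (t : R) (f : aff) : R := ratr f.1 * t + ratr f.2.
Definition pre (row : seq rat) (b : rat) (h : seq aff) : aff :=
  (\sum_(j < size row) nth 0 row j * (nth (0,0) h j).1,
   \sum_(j < size row) nth 0 row j * (nth (0,0) h j).2 + b).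
Definition pres (L : layer) (h : seq aff) : seq aff :=
  [seq pre rb.1 rb.2 h | rb <- zip L.1 L.2].
Definition negf (z : aff) : aff := (- z.1, - z.2).
Fixpoint choose (zs : seq aff) : seq (seq aff * seq aff) :=
  match zs with
  | [::] => [:: ([::], [::])]
  | z :: zs' =>
      [seq (z :: co.1, z :: co.2) | co <- choose zs'] ++
      [seq (negf z :: co.1, (0,0) :: co.2) | co <- choose zs']
  end.
Fixpoint br (N : relu_net) (h : seq aff) : seq (seq aff * seq aff) :=
  match N with
  | [::] => [:: ([::], h)]
  | L :: N' => flatten [seq [seq (co.1 ++ bo.1, bo.2) | bo <- br N' co.2]
                       | co <- choose (pres L h)]
  end.
Definition holds (R : realType) (t : R) (cs : seq aff) :=
  all (fun f => 0 <= ae t f) cs.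

Lemma ae0 (R : realType) (t : R) : ae t (0,0) = 0.
Proof. by rewrite /ae /= !rmorph0 mul0r addr0. Qed.

Lemma aeN (R : realType) (t : R) z : ae t (negf z) = - ae t z.
Proof. by rewrite /ae /= !rmorphN mulNr opprD. Qed.

Lemma ae_pre (R : realType) (t : R) row b h :
  ae t (pre row b h) =
  \sum_(j < size row) ratr (nth 0 row j) * nth 0 (map (ae t) h) j + ratr b.
Proof.
rewrite /ae /= rmorphD !rmorph_sum mulr_suml addrA -big_split /=.
congr (_ + _); apply: eq_bigr => j _.
have [lt|ge] := ltnP j (size h).
  by rewrite (nth_map (0,0)) // /ae !rmorphM /= mulrDr mulrA.
by rewrite [nth (0,0) h j]nth_default // [nth 0 (map _ _) j]nth_default ?size_map //= !mulr0 !rmorph0 mul0r addr0.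
Qed.

Lemma apply_pres (R : realType) (t : R) L h :
  apply_layer L (map (ae t) h) = map (fun z => relu (ae t z)) (pres L h).
Proof.
by rewrite /apply_layer /pres -map_comp; apply: eq_map => -[r b] /=; rewrite ae_pre.
Qed.

Lemma choose_sound (R : realType) (t : R) zs co :
  co \in choose zs -> holds t co.1 ->
  map (ae t) co.2 = map (fun z => relu (ae t z)) zs.
Proof.
elim: zs co => [|z zs IH] co /=.
  by rewrite inE => /eqP -> .
rewrite mem_cat => /orP [] /mapP [c cin ->] /= /andP [hz hc];
  rewrite (IH c cin hc); congr (_ :: _).
  by rewrite /relu max_r.
rewrite ae0 /relu max_l //; by rewrite aeN oppr_ge0 in hz.
Qed.

Lemma choose_complete (R : realType) (t : R) zs :
  exists2 co, co \in choose zs & holds t co.1.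
Proof.
elim: zs => [|z zs [c cin hc]] /=; first by exists ([::],[::]); rewrite ?inE.
have [hz|hz] := lerP 0 (ae t z).
  exists (z :: c.1, z :: c.2); first by rewrite mem_cat map_f.
  by rewrite /holds /= hz.
exists (negf z :: c.1, (0,0) :: c.2).
  by rewrite mem_cat (map_f (fun co => (negf z :: co.1, (0,0) :: co.2))) ?orbT.
by rewrite /holds /= aeN oppr_ge0 ltW.
Qed.

Lemma br_sound (R : realType) (t : R) N h co :
  co \in br N h -> holds t co.1 ->
  foldl (fun h L => apply_layer L h) (map (ae t) h) N = map (ae t) co.2.
Proof.
elim: N h co => [|L N IH] h co /=; first by rewrite inE => /eqP ->.
case/flattenP => s /mapP [c cin ->] /mapP [b bin ->] /=.
rewrite /holds all_cat => /andP [hc hb].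
by rewrite apply_pres -(choose_sound cin hc) (IH _ _ bin hb).
Qed.

Lemma br_complete (R : realType) (t : R) N h :
  exists2 co, co \in br N h & holds t co.1.
Proof.
elim: N h => [|L N IH] h /=; first by exists ([::], h); rewrite ?inE.
have [c cin hc] := choose_complete t (pres L h).
have [b bin hb] := IH c.2.
exists (c.1 ++ b.1, b.2); last by rewrite /holds all_cat; apply/andP.
apply/flattenP; exists [seq (c.1 ++ bo.1, bo.2) | bo <- br N c.2].
  by apply: (map_f (fun co => [seq (co.1 ++ bo.1, bo.2) | bo <- br N co.2])).
by apply: (map_f (fun bo => (c.1 ++ bo.1, bo.2))).
Qed.
Definition good (D B : rat) (f : aff) :=
  [&& f.1 * D \is a Num.int, f.2 * D \is a Num.int, `|f.1| <= B & `|f.2| <= B].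
Definition Dp (s : seq rat) : rat := \prod_(p <- s) (denq p)%:~R.
Definition lpar (L : layer) := flatten L.1 ++ L.2.
Definition Dl (L : layer) := Dp (lpar L).
Definition Sl (L : layer) : rat := 1 + \sum_(p <- lpar L) `|p|.
Definition DN (N : relu_net) := \prod_(L <- N) Dl L.
Definition BN (N : relu_net) := \prod_(L <- N) Sl L.

Lemma mem_zip2 (T1 T2 : eqType) (s : seq T1) (t : seq T2) x y :
  (x, y) \in zip s t -> x \in s /\ y \in t.
Proof.
elim: s t => [|a s IH] [|b t] //=; rewrite inE => /orP [/eqP [-> ->]|].
  by rewrite !inE !eqxx.
by case/IH => h1 h2; rewrite !inE h1 h2 !orbT.
Qed.

Lemma Dp_int s : Dp s \is a Num.int.
Proof. by apply: rpred_prod => p _; apply: intr_int. Qed.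

Lemma DN_int N : DN N \is a Num.int.
Proof. by apply: rpred_prod => L _; apply: Dp_int. Qed.

Lemma Dp_mem p s : p \in s -> p * Dp s \is a Num.int.
Proof.
move=> ps; rewrite /Dp (big_rem p ps) /= mulrA -numqE.
by apply: rpredM; [apply: intr_int | apply: Dp_int].
Qed.

Lemma sum_mem_le (I : eqType) (s : seq I) x (F : I -> rat) :
  x \in s -> (forall y, 0 <= F y) -> F x <= \sum_(y <- s) F y.
Proof.
move=> xs F0; rewrite (big_rem x xs) /= lerDl.
by apply: sumr_ge0 => y _.
Qed.

Lemma prod_ge1 (I : Type) (s : seq I) (F : I -> rat) :
  (forall y, 1 <= F y) -> 1 <= \prod_(y <- s) F y.
Proof.
move=> F1; elim: s => [|a s IH]; first by rewrite big_nil.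
rewrite big_cons; rewrite -[1]mulr1; apply: ler_pM => //.
Qed.

Lemma Sl_ge1 L : 1 <= Sl L.
Proof. by rewrite /Sl lerDl; apply: sumr_ge0 => y _. Qed.

Lemma BN_ge1 N : 1 <= BN N.
Proof. by apply: prod_ge1 => L; apply: Sl_ge1. Qed.

Lemma good0 D B : 0 <= B -> good D B (0,0).
Proof. by move=> B0; rewrite /good /= mul0r rpred0 normr0 B0. Qed.

Lemma goodN D B z : good D B z -> good D B (negf z).
Proof. by rewrite /good /= !normrN !mulNr !rpredN. Qed.

Lemma good_mono D B k B' f : good D B f -> k \is a Num.int -> B <= B' ->
  good (D * k) B' f.
Proof.
case/and4P => h1 h2 h3 h4 kint BB; rewrite /good !mulrA.
apply/and4P; split; try by apply: rpredM.
  exact: le_trans h3 BB.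
exact: le_trans h4 BB.
Qed.

Lemma good_nth D B h j : 0 <= B -> all (good D B) h -> good D B (nth (0,0) h j).
Proof.
move=> B0 /allP hh; have [lt|ge] := ltnP j (size h).
  by apply: hh; rewrite mem_nth.
by rewrite nth_default // good0.
Qed.

Lemma row_le L r b : r \in L.1 -> b \in L.2 ->
  \sum_(w <- r) `|w| + `|b| <= \sum_(p <- lpar L) `|p|.
Proof.
move=> rL bL; rewrite /lpar big_cat /= big_flatten /=.
apply: lerD.
  exact: (sum_mem_le (F := fun r => \sum_(w <- r) `|w|)) (fun y => sumr_ge0 _ _).
by apply: sum_mem_le.
Qed.

Lemma intM4 (w a D E : rat) : w * E \is a Num.int -> a * D \is a Num.int ->
  w * a * (D * E) \is a Num.int.
Proof.
move=> h1 h2; have -> : w * a * (D * E) = (w * E) * (a * D) by ring.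
exact: rpredM.
Qed.

Lemma pre_good D B L r b h : D \is a Num.int -> 1 <= B -> all (good D B) h -> (r, b) \in zip L.1 L.2 ->
  good (D * Dl L) (B * Sl L) (pre r b h).
Proof.
move=> Dint B1 hh /mem_zip2 [rL bL].
have B0 : 0 <= B by apply: le_trans B1.
have wint j : (j < size r)%N -> nth 0 r j * Dl L \is a Num.int.
  move=> jr; apply: Dp_mem; rewrite /lpar mem_cat; apply/orP; left.
  by apply/flattenP; exists r => //; rewrite mem_nth.
have hS := row_le rL bL.
have sumr_eq : \sum_(j < size r) `|nth 0 r j| = \sum_(w <- r) `|w|.
  by rewrite (big_nth 0) big_mkord.
have Hb : forall (G : aff -> rat), (forall f, good D B f -> `|G f| <= B) ->
   `|\sum_(j < size r) nth 0 r j * G (nth (0,0) h j)| <= B * \sum_(w <- r) `|w|.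
  move=> G HG; rewrite -sumr_eq mulr_sumr.
  apply: le_trans (ler_norm_sum _ _ _) _; apply: ler_sum => j _.
  by rewrite normrM mulrC ler_wpM2r // HG // good_nth.
rewrite /good /=; apply/and4P; split.
- rewrite mulr_suml; apply: rpred_sum => j _.
  have := good_nth j B0 hh; case/and4P => g1 _ _ _.
  exact: intM4 (wint _ (ltn_ord j)) g1.
- rewrite mulrDl mulr_suml; apply: rpredD.
    apply: rpred_sum => j _.
    have := good_nth j B0 hh; case/and4P => _ g2 _ _.
    exact: intM4 (wint _ (ltn_ord j)) g2.
  by rewrite mulrCA; apply: rpredM; [exact: Dint | apply: Dp_mem; rewrite /lpar mem_cat bL orbT].
- apply: le_trans (Hb (fun f => f.1) _) _; first by move=> f /and4P [].
  rewrite ler_wpM2l // /Sl.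
  apply: le_trans (_ : _ <= \sum_(p <- lpar L) `|p|) _; last by rewrite lerDr.
  by apply: le_trans hS; rewrite lerDl.
- apply: le_trans (ler_normD _ _) _.
  apply: le_trans (lerD (Hb (fun f => f.2) _) (lexx `|b|)) _; first by move=> f /and4P [].
  apply: le_trans (_ : B * (\sum_(w <- r) `|w| + `|b|) <= _).
    by rewrite mulrDr lerD2l ler_peMl.
  by rewrite ler_wpM2l // /Sl (le_trans hS) // lerDr.
Qed.

Lemma choose_good D B zs co : 0 <= B -> all (good D B) zs -> co \in choose zs ->
  all (good D B) (co.1 ++ co.2).
Proof.
move=> B0; elim: zs co => [|z zs IH] co /=; first by move=> _; rewrite inE => /eqP ->.
case/andP=> gz gzs; rewrite mem_cat => /orP [] /mapP [c cin ->] /=;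
  have := IH c gzs cin; rewrite !all_cat /= => /andP [h1 h2].
  by rewrite gz h1 h2.
by rewrite goodN // h1 good0 // h2.
Qed.

Lemma br_good N h D B co : D \is a Num.int -> 1 <= B -> all (good D B) h -> co \in br N h ->
  all (good (D * DN N) (B * BN N)) (co.1 ++ co.2).
Proof.
elim: N h D B co => [|L N IH] h D B co Dint B1 hh /=.
  rewrite inE => /eqP -> /=; rewrite /DN /BN !big_nil !mulr1.
  by [].
case/flattenP => s /mapP [c cin ->] /mapP [b bin ->] /=.
have B0 : 0 <= B by apply: le_trans B1.
have SB1 : 1 <= B * Sl L by rewrite -[1]mulr1 ler_pM // Sl_ge1.
have hp : all (good (D * Dl L) (B * Sl L)) (pres L h).
  by apply/allP => z /mapP [[r bb] rbin ->]; apply: pre_good.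
have := choose_good (le_trans ler01 SB1) hp cin; rewrite all_cat => /andP [g1 g2].
have := IH _ _ _ _ (rpredM Dint (Dp_int _)) SB1 g2 bin.
rewrite /DN /BN !big_cons !mulrA => hb.
rewrite -catA all_cat hb andbT.
apply/allP => f fin; apply: good_mono; first exact: (allP g1).
  exact: DN_int.
by rewrite ler_peMr ?BN_ge1 // (le_trans ler01).
Qed.
Lemma normq_nat (z : int) : `|(z%:~R : rat)| = (`|z|%N)%:R.
Proof. by rewrite -intr_norm natr_absz. Qed.

Lemma bitlen_nat_le n k : (n <= 2 ^ k)%N -> (bitlen_nat n <= k.+1)%N.
Proof.
move=> nk; rewrite /bitlen_nat ltnS.
case: n nk => [|n] nk; first by rewrite trunc_log0.
have := trunc_logP (isT : (1 < 2)%N) (isT : (0 < n.+1)%N) => h.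
by rewrite -(leq_exp2l _ _ (isT : (1 < 2)%N)) (leq_trans h).
Qed.

Lemma lt_bitlen n k : (bitlen_nat n <= k)%N -> (n < 2 ^ k)%N.
Proof.
move=> h; apply: leq_trans (trunc_log_ltn _ (isT : (1 < 2)%N)) _.
by rewrite leq_exp2l.
Qed.

Lemma natle2 (n k : nat) : (n <= 2 ^ k)%N -> (n%:R : rat) <= 2 ^+ k.
Proof. by move=> h; rewrite -natrX ler_nat. Qed.

Definition rep (T r : rat) := exists U V : rat,
  [/\ U \is a Num.int, V \is a Num.int, V != 0, r = U / V & `|U| <= T /\ `|V| <= T].

Lemma bitlen_rep k r : rep (2 ^+ k) r -> (bitlen_rat r <= (k.+1).*2)%N.
Proof.
case=> U [V [Ui Vi V0 -> [hU hV]]].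
rewrite -(numqK Ui) -(numqK Vi) in hU hV V0 *.
have le2 (n : nat) : (n%:R : rat) <= 2 ^+ k -> (n <= 2 ^ k)%N.
  by rewrite -natrX ler_nat.
move: hU hV V0; rewrite !normq_nat; move: (numq U) (numq V) => u v.
move=> /le2 hU /le2 hV V0; move: hU hV V0.
case: divqP => [|c x c0] hU hV V0; first by move: V0; rewrite eqxx.
rewrite /bitlen_rat -addnn; apply: leq_add; apply: bitlen_nat_le.
  apply: leq_trans hU; rewrite abszM leq_pmull // absz_gt0 //.
apply: leq_trans hV; rewrite abszM leq_pmull // absz_gt0 //.
Qed.

Lemma bits_bound p d : (bitlen_rat p <= d)%N ->
  (denq p)%:~R <= (2 : rat) ^+ d /\ 1 + `|p| <= (2 : rat) ^+ d.
Proof.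
rewrite /bitlen_rat => h.
have hn : (bitlen_nat `|numq p| <= d)%N by apply: leq_trans h; rewrite leq_addr.
have hd : (bitlen_nat `|denq p| <= d)%N by apply: leq_trans h; rewrite leq_addl.
split.
  rewrite -[denq p]gez0_abs ?ltW ?denq_gt0 // -natr_absz.
  by rewrite -natrX ltr_nat; exact: lt_bitlen hd.
have := lt_bitlen hn => /natle2 h2.
apply: le_trans h2; rewrite -natr1 addrC lerD2r natr_absz intr_norm numqE normrM.
rewrite ler_peMr // -intr_norm ler1z gtr0_norm ?denq_gt0 //.
by have := denq_gt0 p.
Qed.
Lemma rep_mono T T' r : T <= T' -> rep T r -> rep T' r.
Proof.
move=> TT [U [V [h1 h2 h3 h4 [h5 h6]]]]; exists U, V; split => //.
by split; apply: le_trans TT.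
Qed.

Lemma end_rep (K x y : rat) : 2 <= K ->
  (denq x)%:~R <= K -> `|x| <= K -> (denq y)%:~R <= K -> `|y| <= K ->
  rep (K ^+ 4) (x + y).
Proof.
move=> K2 dx nx dy ny.
have dx0 : 0 < ((denq x)%:~R : rat) by rewrite ltr0z denq_gt0.
have dy0 : 0 < ((denq y)%:~R : rat) by rewrite ltr0z denq_gt0.
exists ((x + y) * (denq x)%:~R * (denq y)%:~R), ((denq x)%:~R * (denq y)%:~R).
split.
- rewrite mulrDl mulrDl -numqE mulrAC -numqE.
  by apply: rpredD; apply: rpredM; apply: intr_int.
- by apply: rpredM; apply: intr_int.
- by rewrite mulf_neq0 // gt_eqF.
- by field; rewrite !gt_eqF.
have K0 : 0 <= K by apply: le_trans K2.
have K1 : 1 <= K by apply: le_trans K2; rewrite ler1n.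
have dx0' := ltW dx0; have dy0' := ltW dy0.
have KK : 0 <= K * K by rewrite mulr_ge0.
split.
- rewrite !normrM (gtr0_norm dx0) (gtr0_norm dy0).
  have h1 : `|x + y| <= K * K.
    apply: le_trans (ler_normD _ _) _.
    have hxy : `|x| + `|y| <= K + K by apply: lerD.
    apply: le_trans hxy _.
    by rewrite -mulr2n -mulr_natr ler_wpM2l.
  have -> : K ^+ 4 = (K * K) * K * K by rewrite !exprS expr0 mulr1 !mulrA.
  have h2 : `|x + y| * (denq x)%:~R <= K * K * K by apply: ler_pM.
  by apply: ler_pM => //; rewrite mulr_ge0.
- rewrite normrM (gtr0_norm dx0) (gtr0_norm dy0).
  apply: le_trans (_ : K * K <= _); first by apply: ler_pM.
  have -> : K ^+ 4 = (K * K) * (K * K) by rewrite !exprS expr0 mulr1 !mulrA.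
  by rewrite ler_peMr // -[1]mulr1 ler_pM.
Qed.

Lemma root_rep (K D B : rat) f : 1 <= K -> D \is a Num.int -> 1 <= D -> D <= K -> B <= K ->
  good D B f -> f.1 != 0 -> rep (K ^+ 4) (- f.2 / f.1).
Proof.
move=> K1 Di D1 DK BK /and4P [g1 g2 g3 g4] f0.
have D0 : D != 0 by rewrite gt_eqF // (lt_le_trans ltr01).
exists (- (f.2 * D)), (f.1 * D); split.
- by rewrite rpredN.
- by [].
- by rewrite mulf_neq0.
- by field; rewrite f0 D0.
have K0 : 0 <= K by apply: le_trans K1.
have h : forall z, `|z| <= B -> `|z * D| <= K ^+ 4.
  move=> z hz; rewrite normrM (ger0_norm (le_trans ler01 D1)).
  apply: le_trans (_ : K * K <= _).
    have D0' : 0 <= D by apply: le_trans D1.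
    have zK : `|z| <= K by apply: le_trans hz BK.
    by apply: ler_pM.
  have -> : K ^+ 4 = (K * K) * (K * K) by rewrite !exprS expr0 mulr1 !mulrA.
  by rewrite ler_peMr ?mulr_ge0 // -[1]mulr1 ler_pM.
by split; rewrite ?normrN; apply: h.
Qed.

Lemma val_rep (K D B T c : rat) f : 2 <= K -> D \is a Num.int -> 1 <= D -> D <= K -> B <= K ->
  good D B f -> rep T c -> rep (K ^+ 3 * T) (f.1 * c + f.2).
Proof.
move=> K2 Di D1 DK BK /and4P [g1 g2 g3 g4] [U [V [Ui Vi V0 -> [hU hV]]]].
have D0 : D != 0 by rewrite gt_eqF // (lt_le_trans ltr01).
have K0 : 0 <= K by apply: le_trans K2.
have K1 : 1 <= K by apply: le_trans K2; rewrite ler1n.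
have T0 : 0 <= T by apply: le_trans hV.
have B0 : 0 <= B by apply: le_trans (normr_ge0 _) g3.
have D0' : 0 <= D by apply: le_trans D1.
exists (f.1 * D * U + f.2 * D * V), (D * V); split.
- by apply: rpredD; apply: rpredM.
- by apply: rpredM.
- by rewrite mulf_neq0.
- by field; rewrite D0 V0.
split.
- apply: le_trans (ler_normD _ _) _; rewrite !normrM (ger0_norm D0').
  apply: le_trans (_ : B * K * T + B * K * T <= _).
    by apply: lerD; apply: ler_pM => //; rewrite ?mulr_ge0 //; apply: ler_pM.
  have -> : K ^+ 3 * T = K * K * K * T by rewrite !exprS expr0 mulr1 !mulrA.
  have -> : B * K * T + B * K * T = (B * 2) * (K * T) by ring.
  have -> : K * K * K * T = (K * K) * (K * T) by ring.
  have h2 : B * 2 <= K * K by apply: ler_pM.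
  by apply: ler_pM; rewrite ?mulr_ge0.
- rewrite normrM (ger0_norm D0').
  have -> : K ^+ 3 * T = K * K * K * T by rewrite !exprS expr0 mulr1 !mulrA.
  have -> : K * K * K * T = (K * K) * (K * T) by ring.
  have h2 : D <= K * K by rewrite (le_trans DK) // ler_peMr.
  apply: ler_pM; rewrite ?mulr_ge0 //.
  by apply: le_trans hV _; rewrite ler_peMl.
Qed.
Lemma DN_eq N : DN N = Dp (params N).
Proof.
elim: N => [|L N IH]; first by rewrite /DN /Dp /params !big_nil.
by rewrite /DN big_cons -/(DN N) IH /Dp /params /= big_cat.
Qed.

Lemma sum_le_prod (s : seq rat) (F : rat -> rat) : (forall y, 0 <= F y) ->
  1 + \sum_(y <- s) F y <= \prod_(y <- s) (1 + F y).
Proof.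
move=> F0; elim: s => [|a s IH]; first by rewrite !big_nil addr0.
rewrite big_cons big_cons.
have S0 : 0 <= \sum_(y <- s) F y by apply: sumr_ge0.
apply: le_trans (_ : (1 + F a) * (1 + \sum_(y <- s) F y) <= _).
  have := F0 a; nra.
by apply: ler_wpM2l; [rewrite addr_ge0 | ].
Qed.

Lemma BN_le N : BN N <= \prod_(p <- params N) (1 + `|p|).
Proof.
elim: N => [|L N IH]; first by rewrite /BN /params !big_nil.
rewrite /BN big_cons -/(BN N) /params /= big_cat -/(params N) /=.
apply: ler_pM => //.
- exact: le_trans ler01 (Sl_ge1 L).
- exact: le_trans ler01 (BN_ge1 N).
- by apply: sum_le_prod => y.
Qed.

Lemma prod_le_pow (s : seq rat) (F : rat -> rat) c :
  (forall p, p \in s -> 0 <= F p <= c) ->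
  0 <= \prod_(p <- s) F p <= c ^+ size s.
Proof.
elim: s => [|a s IH] h; first by rewrite big_nil ler01 lexx.
rewrite big_cons exprS; have /andP [h1 h2] := h a (mem_head _ _).
have /andP [i1 i2] : 0 <= \prod_(p <- s) F p <= c ^+ size s.
  by apply: IH => p ps; apply: h; rewrite inE ps orbT.
by rewrite mulr_ge0 //=; apply: ler_pM.
Qed.
Lemma wf_params n N : wf_from n N -> N != [::] -> (0 < size (params N))%N.
Proof.
elim: N n => [|L N IH] n //= /andP [_ hw] _.
rewrite /params /= -/(params N) size_cat.
case: N IH hw => [|L' N'] IH hw.
  move: hw => /= /eqP h1; rewrite /lpar size_cat h1; by rewrite addn1.
by rewrite addn_gt0 (IH _ hw) ?orbT.
Qed.

Lemma max_bits_ge N x eps p : p \in x :: eps :: params N ->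
  (bitlen_rat p <= max_bits N x eps)%N.
Proof.
move=> pin; rewrite /max_bits.
exact: (@leq_bigmax_seq _ _ xpredT bitlen_rat p pin).
Qed.

Lemma ae_mono (R : realType) (y z : R) f : 0 <= f.1 -> y <= z -> ae y f <= ae z f.
Proof. by move=> f0 yz; rewrite /ae lerD2r ler_wpM2l // ler0q. Qed.

Lemma ae_anti (R : realType) (y z : R) f : f.1 <= 0 -> y <= z -> ae z f <= ae y f.
Proof. by move=> f0 yz; rewrite /ae lerD2r ler_wnM2l // lerq0. Qed.

Definition root (f : aff) : rat := - f.2 / f.1.

Lemma ae_diff (R : realType) (y : R) f : f.1 != 0 ->
  ae y f = ratr f.1 * (y - ratr (root f)).
Proof.
move=> f0; rewrite /ae /root fmorph_div rmorphN /=.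
have f0' : (ratr f.1 : R) != 0 by rewrite fmorph_eq0.
by field.
Qed.

Lemma root_le (R : realType) (s : R) f : 0 < f.1 -> 0 <= ae s f -> ratr (root f) <= s.
Proof.
move=> f0; rewrite ae_diff ?gt_eqF // pmulr_rge0 ?ltr0q //.
by rewrite subr_ge0.
Qed.

Lemma root_ge (R : realType) (s : R) f : f.1 < 0 -> 0 <= ae s f -> s <= ratr (root f).
Proof.
move=> f0; rewrite ae_diff ?lt_eqF // nmulr_rge0 ?ltrq0 //.
by rewrite subr_le0.
Qed.

Lemma ae_root (R : realType) f : f.1 != 0 -> ae (ratr (root f) : R) f = 0.
Proof. by move=> f0; rewrite ae_diff // subrr mulr0. Qed.

Definition mx (u v : rat) := if u <= v then v else u.
Definition mn (u v : rat) := if u <= v then u else v.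

Lemma foldr_max_mem (x0 : rat) l : foldr mx x0 l \in x0 :: l.
Proof.
elim: l => [|y l IH]; first by rewrite mem_head.
rewrite /= /mx; case: ifP => _; last by rewrite !inE eqxx orbT.
by move: IH; rewrite !inE => /orP [->|->]; rewrite ?orbT.
Qed.

Lemma foldr_min_mem (x0 : rat) l : foldr mn x0 l \in x0 :: l.
Proof.
elim: l => [|y l IH]; first by rewrite mem_head.
rewrite /= /mn; case: ifP => _; first by rewrite !inE eqxx orbT.
by move: IH; rewrite !inE => /orP [->|->]; rewrite ?orbT.
Qed.

Lemma foldr_max_ge (x0 : rat) l y : y \in x0 :: l -> y <= foldr mx x0 l.
Proof.
elim: l => [|z l IH]; first by rewrite inE => /eqP ->.
have e : foldr mx x0 (z :: l) = mx z (foldr mx x0 l) by [].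
have hz : z <= foldr mx x0 (z :: l).
  by rewrite e /mx; case: (lerP z (foldr mx x0 l)) => [h|h].
have hl : foldr mx x0 l <= foldr mx x0 (z :: l).
  by rewrite e /mx; case: (lerP z (foldr mx x0 l)) => [h|/ltW h].
move=> hy; have [->|yz] := eqVneq y z; first exact: hz.
by apply: le_trans (IH _) hl; move: hy; rewrite !inE (negPf yz).
Qed.

Lemma foldr_min_le (x0 : rat) l y : y \in x0 :: l -> foldr mn x0 l <= y.
Proof.
elim: l => [|z l IH]; first by rewrite inE => /eqP ->.
have e : foldr mn x0 (z :: l) = mn z (foldr mn x0 l) by [].
have hz : foldr mn x0 (z :: l) <= z.
  by rewrite e /mn; case: (lerP z (foldr mn x0 l)) => [h|/ltW h].
have hl : foldr mn x0 (z :: l) <= foldr mn x0 l.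
  by rewrite e /mn; case: (lerP z (foldr mn x0 l)) => [h|h].
move=> hy; have [->|yz] := eqVneq y z; first exact: hz.
by apply: le_trans hl (IH _); move: hy; rewrite !inE (negPf yz).
Qed.
Definition roots N := flatten [seq [seq root f | f <- co.1 & f.1 != 0] | co <- br N [:: (1,0)]].
Definition cands N (a b : rat) := [seq c <- a :: b :: roots N | a <= c <= b].

Lemma ne_branch (R : realType) N (t : R) co : co \in br N [:: (1,0)] -> holds t co.1 ->
  net_eval N t = ae t (head (0,0) co.2).
Proof.
move=> coin hh; rewrite /net_eval.
have -> : [:: t] = map (ae t) [:: (1,0)] by rewrite /= /ae rmorph1 rmorph0 mul1r addr0.
rewrite (br_sound coin hh); case: co.2 => [|g s] /=; last by [].
by rewrite ae0.
Qed.

Lemma root_in N co g : co \in br N [:: (1,0)] -> g \in co.1 -> g.1 != 0 -> root g \in roots N.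
Proof.
move=> coin gin g0; apply/flattenP.
exists [seq root f | f <- co.1 & f.1 != 0].
  by apply: (map_f (fun co => [seq root f | f <- co.1 & f.1 != 0])).
by apply: map_f; rewrite mem_filter g0 gin.
Qed.

Lemma minimal_cand (R : realType) N (a b : rat) (s : R) : ratr a <= s -> s <= ratr b ->
  exists2 c, c \in cands N a b & net_eval N (ratr c) <= net_eval N s.
Proof.
move=> hs1 hs2.
have [co coin hco] := br_complete s N [:: (1,0)].
set f := head (0,0) co.2.
set lo := foldr mx a [seq root g | g <- co.1 & 0 < g.1].
set up := foldr mn b [seq root g | g <- co.1 & g.1 < 0].
have lo_s : ratr lo <= s.
  have := foldr_max_mem a [seq root g | g <- co.1 & 0 < g.1].
  rewrite -/lo inE => /orP [/eqP -> // | /mapP [g]].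
  rewrite mem_filter => /andP [g0 gin] ->.
  by apply: root_le g0 _; exact: (allP hco g gin).
have s_up : s <= ratr up.
  have := foldr_min_mem b [seq root g | g <- co.1 & g.1 < 0].
  rewrite -/up inE => /orP [/eqP -> // | /mapP [g]].
  rewrite mem_filter => /andP [g0 gin] ->.
  by apply: root_ge g0 _; exact: (allP hco g gin).
have hlo : holds (ratr lo : R) co.1.
  rewrite /holds; apply/allP => g gin; have gs := allP hco g gin.
  case: (lerP g.1 0) => g0.
    by apply: le_trans gs _; apply: ae_anti.
  have rl : root g <= lo.
    by apply: foldr_max_ge; rewrite inE; apply/orP; right; apply: map_f; rewrite mem_filter g0 gin.
  rewrite -(ae_root R (lt0r_neq0 g0)); apply: ae_mono; first exact: ltW.
  by rewrite ler_rat.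
have hup : holds (ratr up : R) co.1.
  rewrite /holds; apply/allP => g gin; have gs := allP hco g gin.
  case: (lerP 0 g.1) => g0.
    by apply: le_trans gs _; apply: ae_mono.
  have rl : up <= root g.
    by apply: foldr_min_le; rewrite inE; apply/orP; right; apply: map_f; rewrite mem_filter g0 gin.
  rewrite -(ae_root R (ltr0_neq0 g0)); apply: ae_anti; first exact: ltW.
  by rewrite ler_rat.
have lo_in : lo \in cands N a b.
  rewrite mem_filter; apply/andP; split.
    apply/andP; split; first by apply: foldr_max_ge; rewrite mem_head.
    by rewrite -(ler_rat R); apply: le_trans lo_s hs2.
  have := foldr_max_mem a [seq root g | g <- co.1 & 0 < g.1].
  rewrite -/lo inE => /orP [/eqP -> | /mapP [g]]; first by rewrite mem_head.
  rewrite mem_filter => /andP [g0 gin] ->.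
  by rewrite !inE (root_in coin gin (lt0r_neq0 g0)) !orbT.
have up_in : up \in cands N a b.
  rewrite mem_filter; apply/andP; split.
    apply/andP; split; last by apply: foldr_min_le; rewrite mem_head.
    by rewrite -(ler_rat R); apply: le_trans hs1 s_up.
  have := foldr_min_mem b [seq root g | g <- co.1 & g.1 < 0].
  rewrite -/up inE => /orP [/eqP -> | /mapP [g]]; first by rewrite !inE eqxx orbT.
  rewrite mem_filter => /andP [g0 gin] ->.
  by rewrite !inE (root_in coin gin (ltr0_neq0 g0)) !orbT.
case: (lerP 0 f.1) => f0.
  exists lo => //; rewrite (ne_branch coin hlo) (ne_branch coin hco).
  exact: ae_mono f0 lo_s.
exists up => //; rewrite (ne_branch coin hup) (ne_branch coin hco).
exact: ae_anti (ltW f0) s_up.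
Qed.

Lemma argmin (R : realType) (F : rat -> R) (l : seq rat) : l != [::] ->
  exists2 c, c \in l & forall c', c' \in l -> F c <= F c'.
Proof.
elim: l => [|y l IH] // _.
case: l IH => [|z l] IH.
  by exists y; rewrite ?mem_head // => c'; rewrite inE => /eqP ->.
have [c cin hc] := IH isT.
case: (lerP (F y) (F c)) => h.
  exists y; first by rewrite mem_head.
  move=> c'; rewrite inE => /orP [/eqP -> // | c'in].
  by apply: le_trans h (hc _ c'in).
exists c; first by rewrite inE cin orbT.
move=> c'; rewrite inE => /orP [/eqP -> | c'in]; first exact: ltW.
exact: hc.
Qed.

Lemma pow_le (i j : nat) : (i <= j)%N -> (2 : rat) ^+ i <= 2 ^+ j.
Proof. by move=> ij; rewrite -natrX natle2 // leq_exp2l. Qed.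
Theorem lemma11 :
  exists C : nat,
  forall (R : realType) (N : relu_net) (x eps : rat),
    wf_net N -> 0 <= eps ->
    exists (t : R) (q : rat),
      [/\ ratr (x - eps) <= t <= ratr (x + eps),
          net_eval N t = ratr q,
          (forall s : R, ratr (x - eps) <= s <= ratr (x + eps) ->
             net_eval N t <= net_eval N s)
        & (bitlen_rat q <= C * num_params N * max_bits N x eps)%N].
Proof.
exists 16%N => R N x eps hwf e0.
have ab : x - eps <= x + eps by lra.
have ain : x - eps \in cands N (x - eps) (x + eps).
  by rewrite mem_filter lexx ab mem_head.
have cne : cands N (x - eps) (x + eps) != [::].
  by apply/eqP => h; rewrite h in ain.
have [c cin cmin] := argmin (fun c => net_eval N (ratr c : R)) cne.
have [co coin hco] := br_complete (ratr c : R) N [:: (1,0)].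
set f := head (0,0) co.2.
exists (ratr c), (f.1 * c + f.2).
move: (cin); rewrite mem_filter => /andP [/andP [c1 c2] cin'].
split.
- by rewrite !ler_rat c1 c2.
- by rewrite (ne_branch coin hco) /ae rmorphD rmorphM.
- move=> s /andP [s1 s2]; have [c' c'in h] := minimal_cand N s1 s2.
  by apply: le_trans h; apply: cmin.
set m := num_params N; set d := max_bits N x eps.
have m1 : (0 < m)%N.
  by move: hwf; rewrite /wf_net => /andP [n0 w]; apply: wf_params w n0.
have d1 : (0 < d)%N.
  apply: leq_trans (max_bits_ge (N := N) (eps := eps) (mem_head x _)).
  by rewrite /bitlen_rat /bitlen_nat.
set K : rat := 2 ^+ (m * d).
have dK : (2 : rat) ^+ d <= K by apply: pow_le; rewrite leq_pmull.
have K2 : 2 <= K by rewrite -[2 in X in X <= _]expr1; apply: pow_le; rewrite muln_gt0 m1.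
have K1 : 1 <= K by apply: le_trans K2; rewrite ler1n.
have Kexp : (2 : rat) ^+ d ^+ m = K by rewrite /K mulnC exprM.
have pb p : p \in params N -> (denq p)%:~R <= (2 : rat) ^+ d /\ 1 + `|p| <= 2 ^+ d.
  by move=> pin; apply: bits_bound; apply: max_bits_ge; rewrite !inE pin !orbT.
have DK : DN N <= K.
  rewrite DN_eq -Kexp.
  have hp : forall p, p \in params N -> 0 <= ((denq p)%:~R : rat) <= 2 ^+ d.
    move=> p pin; have [h _] := pb p pin; by rewrite h ler0z ltW ?denq_gt0.
  by have /andP [_ ->] := prod_le_pow hp.
have BK : BN N <= K.
  apply: le_trans (BN_le N) _; rewrite -Kexp.
  have hp : forall p, p \in params N -> 0 <= 1 + `|p| <= (2 : rat) ^+ d.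
    move=> p pin; have [_ h] := pb p pin; by rewrite h addr_ge0.
  by have /andP [_ ->] := prod_le_pow hp.
have D1 : 1 <= DN N.
  by rewrite DN_eq; apply: prod_ge1 => y; rewrite ler1z -gtz0_ge1 denq_gt0.
have hgood : forall co', co' \in br N [:: (1,0)] ->
    all (good (DN N) (BN N)) (co'.1 ++ co'.2).
  move=> co' co'in; have := br_good (D := 1) (B := 1) (rpred1 _) (lexx 1) _ co'in.
  rewrite !mul1r; apply.
  apply/allP => g; rewrite inE => /eqP ->; by rewrite /good /= normr0 ler01.
have fgood : good (DN N) (BN N) f.
  rewrite /f; case E: co.2 => [|g s] /=.
    by apply: good0; apply: le_trans ler01 (BN_ge1 N).
  by apply: (allP (hgood co coin)); rewrite mem_cat E mem_head orbT.
have [dx nx] : (denq x)%:~R <= K /\ `|x| <= K.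
  have [h1 h2] := bits_bound (max_bits_ge (N := N) (eps := eps) (mem_head x _)).
  split; [exact: le_trans h1 dK | apply: le_trans dK; apply: le_trans h2; exact: lerDr].
have [de ne] : (denq eps)%:~R <= K /\ `|eps| <= K.
  have ein : eps \in x :: eps :: params N by rewrite !inE eqxx orbT.
  have [h1 h2] := bits_bound (max_bits_ge ein).
  split; [exact: le_trans h1 dK | apply: le_trans dK; apply: le_trans h2; exact: lerDr].
have crep : rep (K ^+ 4) c.
  move: cin'; rewrite !inE => /orP [/eqP -> | /orP [/eqP -> | cr]].
  - by apply: end_rep => //; rewrite ?denqN ?normrN.
  - by apply: end_rep.
  case/flattenP: cr => sq /mapP [co' co'in ->] /mapP [g].
  rewrite mem_filter => /andP [g0 gin] ->.
  apply: (@root_rep K (DN N) (BN N)) => //; first exact: DN_int.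
  by apply: (allP (hgood co' co'in)); rewrite mem_cat gin.
have qrep := val_rep K2 (DN_int N) D1 DK BK fgood crep.
rewrite -exprD /K -exprM in qrep.
apply: leq_trans (bitlen_rep qrep) _.
have k0 : (0 < m * d)%N by rewrite muln_gt0 m1.
have e1 : (16 * m * d = 16 * (m * d))%N by rewrite mulnA.
rewrite e1.
move: (m * d)%N k0 => k k0; clear -k0; lia.
Qed.
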